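(* Let $k\ge 3$ and let $D$ be a digraph on $n$ vertices with $\delta^0(D)\ge\lceil (n+k)/2\rceil-1$. Let $S=(s_1,\dots,s_k)$ be a sequence of distinct vertices of $D$, let $C$ be a longest $S$-cycle in $D$, suppose $C$ is not Hamiltonian, and let $H$ be the subdigraph of $D$ induced by $V(D)\setminus V(C)$. Let $F$ be the set of vertices of $C$ which receive an edge from some vertex of $H$, and $T$ the set of vertices of $C$ which send an edge to some vertex of $H$. Suppose $H$ contains a vertex $v$ with $d^-_H(v)+d^+_H(v)\le |H|+k-1$, and suppose $x_1,x_2\in T$ and $y_1,y_2\in F$ are distinct vertices on $C$. Then $x_1v, vy_1\in E(D)$ or $x_2v, vy_2\in E(D)$ (or both).
   Context: Digraphs have no loops and at most one edge in each direction between any two vertices; paths and cycles are directed. $\delta^0(D)=\min\{\delta^+(D),\delta^-(D)\}$. An $S$-cycle is a directed cycle in $D$ encountering $s_1,\dots,s_k$ in this order. $d^\pm_H(v)$ denotes the out/indegree of $v$ within $H$. *)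

(* Defs.v *)
(* A digraph is an irreflexive relation e on a finType V
   (at most one edge in each direction is automatic for a relation). *)
From mathcomp Require Import all_boot.
Set Implicit Arguments. Unset Strict Implicit. Unset Printing Implicit Defensive.

Section Digraph.
Variable V : finType.
Variable e : rel V.

Definition outdeg (v : V) : nat := #|[set w | e v w]|.
Definition indeg (v : V) : nat := #|[set w | e w v]|.
Definition min_semideg_ge (d : nat) : Prop :=
  forall v : V, d <= outdeg v /\ d <= indeg v.

Definition is_dcycle (c : seq V) : Prop :=
  [/\ uniq c, 2 <= size c & cycle e c].

(* S-cycle: a directed cycle encountering s_1,...,s_k in this (cyclic) order *)
Definition is_S_cycle (S c : seq V) : Prop :=
  is_dcycle c /\ exists i : nat, subseq S (rot i c).

Definition longest_S_cycle (S c : seq V) : Prop :=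
  is_S_cycle S c /\ forall c', is_S_cycle S c' -> size c' <= size c.

Definition Fset (c : seq V) : {set V} :=
  [set y | (y \in c) && [exists h, (h \notin c) && e h y]].
Definition Tset (c : seq V) : {set V} :=
  [set x | (x \in c) && [exists h, (h \notin c) && e x h]].

Definition outdeg_H (c : seq V) (v : V) : nat := #|[set w | (w \notin c) && e v w]|.
Definition indeg_H (c : seq V) (v : V) : nat := #|[set w | (w \notin c) && e w v]|.
End Digraph.

(* Main.v *)
Require Import Defs.
From mathcomp Require Import all_boot.
From mathcomp Require Import zify.
Set Implicit Arguments. Unset Strict Implicit. Unset Printing Implicit Defensive.

Lemma ins_aux (V : finType) (e : rel V) (C : seq V) x y r P :
  uniq (x :: y :: r) -> cycle e (x :: y :: r) -> {subset x :: y :: r <= C} ->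
  uniq P -> all (fun z => z \notin C) P -> path e x P -> e (last x P) y ->
  uniq (x :: P ++ y :: r) && cycle e (x :: P ++ y :: r).
Proof.
move=> uR cR sR uP aP pP lE; apply/andP; split.
  rewrite cons_uniq mem_cat negb_or cat_uniq uP.
  move: uR; rewrite cons_uniq => /andP [-> ->]; rewrite andbT /=.
  have xnP : x \notin P.
    by apply/negP => xP; move/allP: aP => /(_ x xP); rewrite sR // inE eqxx.
  rewrite xnP /= andbT; apply/negP => /orP [zP | /hasP [z zR zP]].
    by move/allP: aP => /(_ y zP); rewrite sR // !inE eqxx orbT.
  by move/allP: aP => /(_ z zP); rewrite sR // !inE zR !orbT.
move: cR; rewrite /cycle /= rcons_cat cat_path pP /=.
by rewrite lE => /andP [].
Qed.

Lemma ins (V : finType) (e : rel V) (S C : seq V) x P :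
  longest_S_cycle e S C -> x \in C -> P != [::] -> uniq P ->
  all (fun z => z \notin C) P -> path e x P -> e (last x P) (next C x) -> False.
Proof.
move=> [[[uC sC cC] [i sub]] long] xC Pn uP aP pP lE.
have xC2 : x \in rot i C by rewrite mem_rot.
have [l1 [l2 E]] : exists l1 l2, rot i C = l1 ++ x :: l2.
  by case/splitPr: xC2 => l1 l2; exists l1, l2.
have uE : uniq (l1 ++ x :: l2) by rewrite -E rot_uniq.
have cE : cycle e (l1 ++ x :: l2) by rewrite -E rot_cycle.
have szE : size (l1 ++ x :: l2) = size C by rewrite -E size_rot.
have sE : {subset l1 ++ x :: l2 <= C} by move=> z; rewrite -E mem_rot.
rewrite -(next_rot i uC) E in lE.
rewrite -(next_rot (size l1) uE) rot_size_cat in lE.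
have R1 := uE; rewrite -(rot_uniq (size l1)) rot_size_cat in R1.
have R2 := cE; rewrite -(rot_cycle (size l1)) rot_size_cat in R2.
have R3 : {subset (x :: l2) ++ l1 <= C}.
  by move=> z zi; apply: sE; rewrite -(mem_rot (size l1)) rot_size_cat.
move: lE R1 R2 R3; rewrite cat_cons.
case L: (l2 ++ l1) => [|y r].
  have H0 : size (l2 ++ l1) = 0 by rewrite L.
  move: szE H0 sC; rewrite !size_cat /= => H1 H0 H2.
  move: H0 H1 H2; clear; lia.
move=> lE R1 R2 R3.
have ny : next [:: x, y & r] x = y by rewrite /next /= eqxx.
rewrite ny in lE.
have /andP [u1 c1] := ins_aux R1 R2 R3 uP aP pP lE.
set N := l1 ++ x :: P ++ l2.
have rN : rot (size l1) N = x :: P ++ y :: r by rewrite /N rot_size_cat /= -L catA.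
have : is_S_cycle e S N.
  split; last first.
    exists 0; rewrite rot0 /N; move: sub; rewrite E => sub.
    apply: (subseq_trans sub); apply: cat_subseq => //.
    by rewrite /= eqxx suffix_subseq.
  split.
  - by rewrite -(rot_uniq (size l1)) rN.
  - move: sC; rewrite -szE /N !size_cat /= size_cat; clear; lia.
  - by rewrite -(rot_cycle (size l1)) rN.
move/long; rewrite -szE /N !size_cat /=.
case: P Pn {uP aP pP lE u1 c1 N rN} => //= p0 p _.
rewrite size_cat; clear; lia.
Qed.

Definition eH (V : finType) (e : rel V) (C : seq V) : rel V :=
  [rel a b | [&& e a b, a \notin C & b \notin C]].

Lemma path_notin (V : finType) (e : rel V) (C : seq V) a p :
  path (eH e C) a p -> all (fun z => z \notin C) p.
Proof.
elim: p a => //= b p IH a /andP [/and3P [_ _ bC] pp].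
by rewrite bC (IH b pp).
Qed.

Lemma conn_notin (V : finType) (e : rel V) (C : seq V) a b :
  a \notin C -> connect (eH e C) a b -> b \notin C.
Proof.
move=> aC /connectP [p pp ->].
have := mem_last a p; rewrite inE => /orP [/eqP -> //|].
by move/allP: (path_notin pp) => H /H.
Qed.

Lemma subrel_eH (V : finType) (e : rel V) (C : seq V) : subrel (eH e C) e.
Proof. by move=> u w /and3P []. Qed.

Lemma nobridge (V : finType) (e : rel V) (S C : seq V) x a b :
  longest_S_cycle e S C -> x \in C -> a \notin C -> e x a -> e b (next C x) ->
  connect (eH e C) a b -> False.
Proof.
move=> L xC aC xa bn /connectP [p pp bE].
move: bn; rewrite bE; case: (shortenP pp) => p' pp' up' _ bn.
apply: (ins (P := a :: p') L xC) => //=.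
- by rewrite aC (path_notin pp').
- by rewrite xa (sub_path (@subrel_eH V e C) pp').
Qed.

Definition Cs (V : finType) (C : seq V) : {set V} := [set z | z \in C].
Definition InS (V : finType) (e : rel V) (C : seq V) x : {set V} :=
  [set z | (z \in C) && e z x].
Definition OutS (V : finType) (e : rel V) (C : seq V) y : {set V} :=
  [set z | (z \in C) && e y z].
Definition OutP (V : finType) (e : rel V) (C : seq V) y : {set V} :=
  [set z | (z \in C) && e y (next C z)].
Definition Bad (V : finType) (e : rel V) (C : seq V) x y : {set V} :=
  Cs C :\: (InS e C x :|: OutP e C y).

Lemma card_Cs (V : finType) (C : seq V) : uniq C -> #|Cs C| = size C.
Proof. by move=> uC; rewrite /Cs cardsE; apply/card_uniqP. Qed.

Lemma card_OutP (V : finType) (e : rel V) (C : seq V) y :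
  uniq C -> #|OutP e C y| = #|OutS e C y|.
Proof.
move=> uC.
have -> : OutP e C y = next C @^-1: OutS e C y.
  by apply/setP => z; rewrite !inE mem_next.
by apply: card_preimset; apply: (can_inj (prev_next uC)).
Qed.

Lemma in_Bad (V : finType) (e : rel V) (C : seq V) x y z :
  (z \in Bad e C x y) = [&& z \in C, ~~ e z x & ~~ e y (next C z)].
Proof. by rewrite !inE negb_or; case: (z \in C); rewrite ?andbF ?andbT. Qed.

Lemma count_lem (V : finType) (e : rel V) (S C : seq V) x y :
  longest_S_cycle e S C -> x \notin C -> connect (eH e C) x y ->
  #|InS e C x| + #|OutS e C y| + #|Bad e C x y| = size C.
Proof.
move=> L xC cxy; have uC : uniq C by case: L => [[[]]].
rewrite -(card_OutP e y uC) -(card_Cs uC).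
have dis : InS e C x :&: OutP e C y = set0.
  apply/setP => z; rewrite !inE; apply/negP => /andP [/andP [zC zx] /andP [_ yn]].
  exact: (nobridge L zC xC zx yn cxy).
have cU : #|InS e C x :|: OutP e C y| = #|InS e C x| + #|OutP e C y|.
  by rewrite cardsU dis cards0 subn0.
have sU : InS e C x :|: OutP e C y \subset Cs C.
  by apply/subsetP => z; rewrite !inE => /orP [] /andP [].
rewrite -cU /Bad -(cardsID (InS e C x :|: OutP e C y) (Cs C)).
by move/setIidPr: sU => ->.
Qed.

Lemma indeg_split (V : finType) (e : rel V) (C : seq V) z :
  indeg e z = #|InS e C z| + indeg_H e C z.
Proof.
rewrite /indeg /indeg_H -(cardsID (Cs C) [set w | e w z]); congr (_ + _).
  by apply: eq_card => w; rewrite !inE andbC.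
by apply: eq_card => w; rewrite !inE andbC.
Qed.

Lemma outdeg_split (V : finType) (e : rel V) (C : seq V) z :
  outdeg e z = #|OutS e C z| + outdeg_H e C z.
Proof.
rewrite /outdeg /outdeg_H -(cardsID (Cs C) [set w | e z w]); congr (_ + _).
  by apply: eq_card => w; rewrite !inE andbC.
by apply: eq_card => w; rewrite !inE andbC.
Qed.

Lemma dbound N : N <= 2 * (uphalf N - 1) + 2.
Proof. rewrite uphalf_half; have := odd_double_half N; rewrite -muln2; lia. Qed.

Lemma card_H (V : finType) (C : seq V) :
  uniq C -> #|[set z | z \notin C]| = #|V| - size C.
Proof.
move=> uC; rewrite -(card_Cs uC) -(cardsC (Cs C)) addKn.
by apply: eq_card => z; rewrite !inE.
Qed.

Lemma card_sub1 (V : finType) (X Y : {set V}) y :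
  y \in Y -> X \subset Y :\ y -> #|X| <= #|Y| - 1.
Proof.
move=> yY /subset_leq_card; rewrite (cardsD1 y Y) yY /=; lia.
Qed.

Lemma sc (V : finType) (e : rel V) (S C : seq V) :
  irreflexive e -> 1 <= size S ->
  min_semideg_ge e (uphalf (#|V| + size S) - 1) ->
  longest_S_cycle e S C ->
  forall u w, u \notin C -> w \notin C -> connect (eH e C) u w.
Proof.
move=> irr kS dg L u w uC wC.
have uCC : uniq C by case: L => [[[]]].
set d := uphalf (#|V| + size S) - 1.
have dB : #|V| + size S <= 2 * d + 2 by apply: dbound.
have dIn : forall z, d <= #|InS e C z| + indeg_H e C z.
  by move=> z; rewrite -indeg_split; case: (dg z).
have dOut : forall z, d <= #|OutS e C z| + outdeg_H e C z.
  by move=> z; rewrite -outdeg_split; case: (dg z).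
case E: (connect (eH e C) u w) => //; exfalso.
set A := [set z | connect (eH e C) u z].
set B := [set z | (z \notin C) && (z \notin A)].
have AH : forall z, z \in A -> z \notin C.
  by move=> z; rewrite inE; apply: conn_notin.
have cAB : #|A| + #|B| = #|V| - size C.
  rewrite -(card_H uCC) -(cardsID A [set z | z \notin C]).
  congr (_ + _); apply: eq_card => z; rewrite !inE; last by rewrite andbC.
  case zA: (connect (eH e C) u z); rewrite ?andbF ?andbT //=.
  by rewrite (conn_notin uC zA).
have uA : u \in A by rewrite inE connect0.
have wB : w \in B by rewrite !inE wC /= E.
have mle : size C <= #|V| by rewrite -(card_Cs uCC) max_card.
have A0 : 0 < #|A| by apply/card_gt0P; exists u.
have B0 : 0 < #|B| by apply/card_gt0P; exists w.
have outA : forall a, a \in A -> outdeg_H e C a <= #|A| - 1.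
  move=> a aA; apply: (card_sub1 aA); apply/subsetP => z.
  rewrite !inE => /andP [zC az]; apply/andP; split.
    by apply/eqP => za; move: az; rewrite za irr.
  apply: (connect_trans (y := a)); first by move: aA; rewrite inE.
  by apply: connect1; rewrite /eH /= az zC (AH a aA).
have inB : forall b, b \in B -> indeg_H e C b <= #|B| - 1.
  move=> b bB; apply: (card_sub1 bB); apply/subsetP => z.
  rewrite !inE => /andP [zC zb]; apply/andP; split.
    by apply/eqP => zb'; move: zb; rewrite zb' irr.
  rewrite zC /=; apply/negP => zA; move: bB; rewrite !inE => /andP [bC].
  rewrite (connect_trans (y := z)) //.
  by apply: connect1; rewrite /eH /= zb zC bC.
have cnt : forall x y, x \notin C -> connect (eH e C) x y ->
    #|InS e C x| + #|OutS e C y| <= size C.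
  by move=> x y xC cxy; rewrite -(count_lem L xC cxy) leq_addr.
case: (boolP [exists b, exists a, [&& b \in B, a \in A & e b a]]).
  move=> /existsP [b /existsP [a /and3P [bB aA ba]]].
  have bC : b \notin C by move: bB; rewrite inE => /andP [].
  have cba : connect (eH e C) b a.
    by apply: connect1; rewrite /eH /= ba bC (AH a aA).
  have h1 := cnt b a bC cba; have h2 := dIn b; have h3 := dOut a.
  have h4 := outA a aA; have h5 := inB b bB.
  move: h1 h2 h3 h4 h5 cAB dB kS mle A0 B0; clear; lia.
move=> noE.
have inA : indeg_H e C u <= #|A| - 1.
  apply: (card_sub1 uA); apply/subsetP => z.
  rewrite !inE => /andP [zC zu]; apply/andP; split.
    by apply/eqP => zu'; move: zu; rewrite zu' irr.
  apply/negPn/negP => zA; move/negP: noE; apply; apply/existsP; exists z.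
  by apply/existsP; exists u; rewrite uA zu !inE zC /= andbT.
have outB : outdeg_H e C w <= #|B| - 1.
  apply: (card_sub1 wB); apply/subsetP => z.
  rewrite !inE => /andP [zC wz]; apply/andP; split.
    by apply/eqP => zw; move: wz; rewrite zw irr.
  rewrite zC /=; apply/negP => zA; move/negP: noE; apply; apply/existsP; exists w.
  by apply/existsP; exists z; rewrite wB wz andbT inE.
have h1 := cnt u u uC (connect0 _ u); have h2 := cnt w w wC (connect0 _ w).
have h3 := dIn u; have h4 := dOut u; have h5 := dIn w; have h6 := dOut w.
have h7 := outA u uA; have h8 := inB w wB.
move: h1 h2 h3 h4 h5 h6 h7 h8 inA outB cAB dB kS mle A0 B0; clear; lia.
Qed.

Theorem lemma10 (V : finType) (e : rel V) (S C : seq V) (v x1 x2 y1 y2 : V) :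
  irreflexive e ->
  3 <= size S ->
  uniq S ->
  min_semideg_ge e (uphalf (#|V| + size S) - 1) ->
  longest_S_cycle e S C ->
  size C < #|V| ->
  v \notin C ->
  indeg_H e C v + outdeg_H e C v <= (#|V| - size C) + size S - 1 ->
  x1 \in Tset e C -> x2 \in Tset e C -> y1 \in Fset e C -> y2 \in Fset e C ->
  uniq [:: x1; x2; y1; y2] ->
  (e x1 v && e v y1) \/ (e x2 v && e v y2).
Proof.
move=> irr k3 uS dg L szC vC dH x1T x2T y1F y2F u4.
have uC : uniq C by case: L => [[[]]].
have k1 : 1 <= size S by apply: leq_trans k3.
have TF : forall x, x \in Tset e C -> next C x \in Fset e C -> False.
  move=> x; rewrite !inE => /andP [xC /existsP [h1 /andP [h1C xh1]]].
  move=> /andP [_ /existsP [h2 /andP [h2C h2n]]].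
  exact: (nobridge L xC h1C xh1 h2n (sc irr k1 dg L h1C h2C)).
have BadT : forall x, x \in Tset e C -> ~~ e x v -> x \in Bad e C v v.
  move=> x xT nxv; have xC : x \in C by move: xT; rewrite inE => /andP [].
  rewrite in_Bad nxv xC /=; apply/negP => vn; apply: (TF x xT).
  by rewrite inE mem_next xC /=; apply/existsP; exists v; rewrite vC vn.
have BadF : forall y, y \in Fset e C -> ~~ e v y -> prev C y \in Bad e C v v.
  move=> y yF nvy; have yC : y \in C by move: yF; rewrite inE => /andP [].
  rewrite in_Bad mem_prev yC (next_prev uC) nvy andbT /=.
  apply/negP => pv; apply: (TF (prev C y)); last by rewrite (next_prev uC).
  by rewrite inE mem_prev yC /=; apply/existsP; exists v; rewrite vC pv.
have cnt := count_lem L vC (connect0 _ v).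
have dB := dbound (#|V| + size S).
have h2 : uphalf (#|V| + size S) - 1 <= #|InS e C v| + indeg_H e C v.
  by rewrite -indeg_split; case: (dg v).
have h3 : uphalf (#|V| + size S) - 1 <= #|OutS e C v| + outdeg_H e C v.
  by rewrite -outdeg_split; case: (dg v).
have B1 : #|Bad e C v v| <= 1.
  move: cnt dB h2 h3 dH szC k3.
  move: (uphalf (#|V| + size S) - 1) => d; clear; lia.
have Beq : forall a b, a \in Bad e C v v -> b \in Bad e C v v -> a = b.
  move=> a b aB bB; apply/eqP/negP => /negP ab.
  have : #|[set a; b]| <= #|Bad e C v v|.
    by apply: subset_leq_card; apply/subsetP => z; rewrite in_set2 => /orP [] /eqP ->.
  by rewrite cards2 ab; move: B1; clear; lia.
have Bx : forall x y, x \in Tset e C -> y \in Fset e C -> ~~ (e x v && e v y) ->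
    (x \in Bad e C v v) \/ (prev C y \in Bad e C v v).
  move=> x y xT yF; rewrite negb_and => /orP [nx | ny].
    by left; apply: BadT.
  by right; apply: BadF.
case: (boolP (e x1 v && e v y1)) => [H|H1]; first by left.
case: (boolP (e x2 v && e v y2)) => [H|H2]; first by right.
exfalso.
move: u4; rewrite /= !inE !negb_or => /andP [/and3P [n12 n13 n14] /andP [/andP [n23 n24] /andP [n34 _]]].
have nxt : forall y, y \in Fset e C -> next C (prev C y) = y by move=> y _; rewrite (next_prev uC).
case: (Bx _ _ x1T y1F H1) => b1; case: (Bx _ _ x2T y2F H2) => b2.
- by move: n12; rewrite (Beq _ _ b1 b2) eqxx.
- by apply: (TF x1 x1T); rewrite (Beq _ _ b1 b2) nxt.
- by apply: (TF x2 x2T); rewrite -(Beq _ _ b1 b2) nxt.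
- move: n34; have := congr1 (next C) (Beq _ _ b1 b2).
  by rewrite !(next_prev uC) => ->; rewrite eqxx.
Qed.
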